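(* (i) Let $\mu$ be a measure and $f,g$ nonnegative elements of $\mathbb{L}_2(\mu)$ with $\|f\|=1$ and $\|g\|>0$, and let $\overline{g}=g/\|g\|$. Then \[ \|f-\overline{g}\|^2\le\frac{4\|f-g\|^2}{4-\|f-\overline{g}\|^2}\le2\|f-g\|^2. \] (ii) If $s$ is a probability density with respect to $\mu$, $g$ a nonnegative element of $\mathbb{L}_2(\mu)$ with $\|g\|>0$ and $u=(g/\|g\|)^2$, then $u$ is a probability density with respect to $\mu$ and \[ h^2(s,u)\le1-\sqrt{1-\left(\|\sqrt{s}-g\|^2\wedge1\right)}\le\|\sqrt{s}-g\|^2\wedge1. \] (iii) If $t\in\mathbb{L}_1(\mu)$ satisfies $\int(t\vee0)\,d\mu>0$ and $\pi(t)=(t\vee0)/\int(t\vee0)\,d\mu$, then \[ h^2(s,\pi(t))\le1-\sqrt{1-\left(\|\sqrt{s}-\sqrt{t\vee0}\|^2\wedge1\right)}\le\|\sqrt{s}-\sqrt{t\vee0}\|^2\wedge1. \]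
   Context: $\|\cdot\|$ is the $\mathbb{L}_2(\mu)$ norm. For probability densities $s,u$ with respect to $\mu$, $h^2(s,u)=\frac12\int(\sqrt{s}-\sqrt{u})^2\,d\mu$ is the squared Hellinger distance. *)

(* Defs.v *)
From HB Require Import structures.
From mathcomp Require Import all_boot all_order all_algebra.
From mathcomp Require Import all_classical all_reals all_analysis.
Set Implicit Arguments. Unset Strict Implicit. Unset Printing Implicit Defensive.
Import Order.TTheory GRing.Theory Num.Theory.
Local Open Scope classical_set_scope.
Local Open Scope ring_scope.

Definition isL2 d (T : measurableType d) (R : realType)
  (mu : {measure set T -> \bar R}) (f : T -> R) : Prop :=
  measurable_fun setT f /\ mu.-integrable setT (fun x => (f x ^+ 2)%:E).

Definition isL1 d (T : measurableType d) (R : realType)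
  (mu : {measure set T -> \bar R}) (f : T -> R) : Prop :=
  measurable_fun setT f /\ mu.-integrable setT (fun x => (f x)%:E).

Definition L2norm d (T : measurableType d) (R : realType)
  (mu : {measure set T -> \bar R}) (f : T -> R) : R :=
  Num.sqrt (fine (\int[mu]_x (f x ^+ 2)%:E)).

Definition is_density d (T : measurableType d) (R : realType)
  (mu : {measure set T -> \bar R}) (s : T -> R) : Prop :=
  measurable_fun setT s /\ (forall x, 0 <= s x) /\
  (\int[mu]_x (s x)%:E = 1)%E.

Definition hellinger2 d (T : measurableType d) (R : realType)
  (mu : {measure set T -> \bar R}) (s u : T -> R) : R :=
  2^-1 * fine (\int[mu]_x ((Num.sqrt (s x) - Num.sqrt (u x)) ^+ 2)%:E).

(* Main.v *)
Require Import Defs.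
From HB Require Import structures.
From mathcomp Require Import all_boot all_order all_algebra.
From mathcomp Require Import all_classical all_reals all_analysis.
From mathcomp Require Import ring lra measurable_realfun.
Import Order.TTheory GRing.Theory Num.Theory.
Local Open Scope classical_set_scope.
Local Open Scope ring_scope.

Lemma meas_sqrt (R : realType) : measurable_fun setT (@Num.sqrt R).
Proof. exact: continuous_measurable_fun (@sqrt_continuous R). Qed.

Lemma L2_prod_int {d} {T : measurableType d} {R : realType}
  {mu : {measure set T -> \bar R}} {f g : T -> R} :
  isL2 mu f -> isL2 mu g ->
  mu.-integrable setT (EFin \o (fun x => f x * g x)).
Proof.
move=> [mf If] [mg Ig].
apply: (le_integrable measurableT _ _ (integrableD measurableT If Ig)).
  by apply/measurable_EFinP; exact: measurable_funM.
move=> x _ /=.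
rewrite lee_fin [X in _ <= X]ger0_norm; last by rewrite addr_ge0 // sqr_ge0.
have [h|h] := leP 0 (f x * g x).
  rewrite ger0_norm //; nra.
rewrite ltr0_norm //; nra.
Qed.

Lemma L2_expand {d} {T : measurableType d} {R : realType}
  {mu : {measure set T -> \bar R}} (f g h : T -> R) (c : R) :
  isL2 mu f -> isL2 mu g -> (forall x, h x = f x - c * g x) ->
  fine (\int[mu]_x (h x ^+ 2)%:E) =
  fine (\int[mu]_x (f x ^+ 2)%:E) - 2 * c * fine (\int[mu]_x (f x * g x)%:E)
  + c ^+ 2 * fine (\int[mu]_x (g x ^+ 2)%:E).
Proof.
move=> Hf Hg eh.
have Ifg := L2_prod_int Hf Hg.
case: Hf => mf If; case: Hg => mg Ig.
have -> : fine (\int[mu]_x (h x ^+ 2)%:E) =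
   \int[mu]_(x in setT) (f x ^+ 2 + ((- (2 * c)) * (f x * g x) + c ^+ 2 * g x ^+ 2)).
  rewrite /Rintegral; congr fine; apply: eq_integral => x _; rewrite eh; congr EFin.
  ring.
have IZ1 := integrableZl measurableT (- (2 * c)) Ifg.
have IZ2 := integrableZl measurableT (c ^+ 2) Ig.
rewrite RintegralD //; last first.
  apply: (eq_integrable measurableT _ _ _ (integrableD measurableT IZ1 IZ2)) => x _ //.
rewrite RintegralD //.
rewrite !RintegralZl //.
rewrite /Rintegral; ring.
Qed.

Lemma L2norm_sq {d} {T : measurableType d} {R : realType}
  {mu : {measure set T -> \bar R}} (f : T -> R) :
  L2norm mu f ^+ 2 = fine (\int[mu]_x (f x ^+ 2)%:E).
Proof.
rewrite /L2norm sqr_sqrtr //; apply: fine_ge0; apply: integral_ge0 => x _.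
by rewrite lee_fin sqr_ge0.
Qed.

Lemma ip_ge0 {d} {T : measurableType d} {R : realType}
  {mu : {measure set T -> \bar R}} (f g : T -> R) :
  (forall x, 0 <= f x) -> (forall x, 0 <= g x) ->
  0 <= fine (\int[mu]_x (f x * g x)%:E).
Proof.
move=> f0 g0; apply: fine_ge0; apply: integral_ge0 => x _.
by rewrite lee_fin mulr_ge0.
Qed.

Lemma alg_i (R : realType) (a N : R) : 0 <= a -> 0 < N ->
  0 <= 1 - 2 * a * N + N ^+ 2 ->
  (2 - 2 * a) <= 4 * (1 - 2 * a * N + N ^+ 2) / (4 - (2 - 2 * a)) /\
  4 * (1 - 2 * a * N + N ^+ 2) / (4 - (2 - 2 * a)) <= 2 * (1 - 2 * a * N + N ^+ 2).
Proof.
move=> a0 N0 B1.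
have D0 : 0 < 4 - (2 - 2 * a) by lra.
have B0 : 1 - a ^+ 2 <= 1 - 2 * a * N + N ^+ 2.
  have := sqr_ge0 (N - a); rewrite !expr2; nra.
split.
  rewrite ler_pdivlMr //; nra.
rewrite ler_pdivrMr //.
nra.
Qed.

Lemma alg_ii (R : realType) (a N E : R) : 0 <= a -> 0 < N -> 0 <= E ->
  E = 1 - 2 * a * N + N ^+ 2 ->
  1 - a <= 1 - Num.sqrt (1 - Order.min E 1) /\
  1 - Num.sqrt (1 - Order.min E 1) <= Order.min E 1.
Proof.
move=> a0 N0 E0 eE.
set e := Order.min E 1.
have e1 : e <= 1 by rewrite /e ge_min lexx orbT.
have e0 : 0 <= e by rewrite /e le_min E0 ler01.
have ea : 1 - e <= a ^+ 2.
  have := sqr_ge0 (N - a); rewrite !expr2 => hh.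
  rewrite /e /Order.min; case: ifP => h; [nra | nra].
have r0 := sqrtr_ge0 (1 - e).
have r2 : Num.sqrt (1 - e) ^+ 2 = 1 - e by rewrite sqr_sqrtr //; lra.
split.
  have : Num.sqrt (1 - e) <= a.
    rewrite -(ger0_norm a0) -sqrtr_sqr ler_sqrt //; exact: sqr_ge0.
  lra.
have r1 : Num.sqrt (1 - e) <= 1 by nra.
nra.
Qed.

Lemma dens_int {d} {T : measurableType d} {R : realType}
  {mu : {measure set T -> \bar R}} {s : T -> R} :
  is_density mu s -> mu.-integrable setT (EFin \o s).
Proof.
move=> [ms [s0 s1]]; apply/integrableP; split; first exact/measurable_EFinP.
rewrite (eq_integral (fun x => (s x)%:E)); first by rewrite s1 ltry.
by move=> x _ /=; rewrite ger0_norm.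
Qed.

Lemma dens_sqrt {d} {T : measurableType d} {R : realType}
  {mu : {measure set T -> \bar R}} {s : T -> R} :
  is_density mu s -> isL2 mu (fun x => Num.sqrt (s x)) /\
  fine (\int[mu]_x (Num.sqrt (s x) ^+ 2)%:E) = 1.
Proof.
move=> hs; have Is := dens_int hs; case: hs => [ms [s0 s1]].
have E : (\int[mu]_x (Num.sqrt (s x) ^+ 2)%:E = \int[mu]_x (s x)%:E)%E.
  by apply: eq_integral => x _ /=; rewrite sqr_sqrtr.
split; last by rewrite E s1.
split; first exact: measurableT_comp (meas_sqrt R) ms.
apply: (eq_integrable measurableT _ _ _ Is) => x _ /=; by rewrite sqr_sqrtr.
Qed.

Lemma L1_sqrt {d} {T : measurableType d} {R : realType}
  {mu : {measure set T -> \bar R}} {t : T -> R} :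
  isL1 mu t -> isL2 mu (fun x => Num.sqrt (Order.max (t x) 0)) /\
  (\int[mu]_x (Num.sqrt (Order.max (t x) 0) ^+ 2)%:E = \int[mu]_x (Order.max (t x) 0)%:E)%E
  /\ mu.-integrable setT (fun x => (Order.max (t x) 0)%:E).
Proof.
move=> [mt It].
have m0 : measurable_fun setT (fun x => Order.max (t x) 0).
  exact: (measurable_maxr mt (measurable_cst (0:R))).
have Im : mu.-integrable setT (fun x => (Order.max (t x) 0)%:E).
  apply: (le_integrable measurableT _ _ It).
    exact/measurable_EFinP.
  move=> x _ /=; rewrite lee_fin.
  rewrite /Order.max; case: ifP => h; rewrite ?normr0 ?normr_ge0 //.
have E : (\int[mu]_x (Num.sqrt (Order.max (t x) 0) ^+ 2)%:E = \int[mu]_x (Order.max (t x) 0)%:E)%E.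
  by apply: eq_integral => x _ /=; rewrite sqr_sqrtr // le_max lexx orbT.
split; last by split.
split; first exact: measurableT_comp (meas_sqrt R) m0.
apply: (eq_integrable measurableT _ _ _ Im) => x _ /=.
by rewrite sqr_sqrtr // le_max lexx orbT.
Qed.

Lemma part_i {d} {T : measurableType d} {R : realType}
  (mu : {measure set T -> \bar R}) :
  (forall f g : T -> R,
     isL2 mu f -> isL2 mu g ->
     (forall x, 0 <= f x) -> (forall x, 0 <= g x) ->
     L2norm mu f = 1 -> 0 < L2norm mu g ->
     let gbar := fun x => g x / L2norm mu g in
     L2norm mu (fun x => f x - gbar x) ^+ 2
       <= 4 * L2norm mu (fun x => f x - g x) ^+ 2
          / (4 - L2norm mu (fun x => f x - gbar x) ^+ 2)
     /\ 4 * L2norm mu (fun x => f x - g x) ^+ 2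
          / (4 - L2norm mu (fun x => f x - gbar x) ^+ 2)
        <= 2 * L2norm mu (fun x => f x - g x) ^+ 2).
Proof.
move=> f g Hf Hg f0 g0 nf Ng gbar.
set N := L2norm mu g.
have eF : fine (\int[mu]_x (f x ^+ 2)%:E) = 1 by rewrite -L2norm_sq nf expr1n.
have eG : fine (\int[mu]_x (g x ^+ 2)%:E) = N ^+ 2 by rewrite L2norm_sq.
have P0 := @ip_ge0 _ _ _ mu f g f0 g0.
set P := fine (\int[mu]_x (f x * g x)%:E) in P0.
have NN : N != 0 by rewrite gt_eqF.
have eA : L2norm mu (fun x => f x - gbar x) ^+ 2 = 2 - 2 * (P / N).
  rewrite L2norm_sq (L2_expand f g _ N^-1 Hf Hg); last by move=> x; rewrite /gbar mulrC.
  by rewrite eF eG -/P; field.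
have eB : L2norm mu (fun x => f x - g x) ^+ 2 = 1 - 2 * (P / N) * N + N ^+ 2.
  rewrite L2norm_sq (L2_expand f g _ 1 Hf Hg); last by move=> x; rewrite mul1r.
  by rewrite eF eG -/P; field.
have B0 := sqr_ge0 (L2norm mu (fun x => f x - g x)).
rewrite eA eB; apply: alg_i => //; [exact: divr_ge0 (ltW Ng) | by rewrite -eB].
Qed.

Lemma part_ii {d} {T : measurableType d} {R : realType}
  (mu : {measure set T -> \bar R}) :
  (forall s g : T -> R,
     is_density mu s -> isL2 mu g -> (forall x, 0 <= g x) ->
     0 < L2norm mu g ->
     let u := fun x => (g x / L2norm mu g) ^+ 2 in
     let e := Order.min (L2norm mu (fun x => Num.sqrt (s x) - g x) ^+ 2) 1 in
     is_density mu u /\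
     hellinger2 mu s u <= 1 - Num.sqrt (1 - e) /\
     1 - Num.sqrt (1 - e) <= e).
Proof.
move=> s g Hs Hg g0 Ng u e.
have [Hf eF] := dens_sqrt Hs.
set N := L2norm mu g.
have eG : fine (\int[mu]_x (g x ^+ 2)%:E) = N ^+ 2 by rewrite L2norm_sq.
have P0 := @ip_ge0 _ _ _ mu (fun x => Num.sqrt (s x)) g (fun x => sqrtr_ge0 _) g0.
set P := fine (\int[mu]_x (Num.sqrt (s x) * g x)%:E) in P0.
have NN : N != 0 by rewrite gt_eqF.
split.
  case: (Hg) => mg Ig.
  split.
    apply: measurable_funX; apply: measurable_funM => //; exact: measurable_cst.
  split; first by move=> x; exact: sqr_ge0.
  have -> : (\int[mu]_x (u x)%:E = (N^-1 ^+ 2)%:E * \int[mu]_x (g x ^+ 2)%:E)%E.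
    rewrite -integralZl //; apply: eq_integral => x _ /=.
    by rewrite /u -EFinM exprMn mulrC.
  rewrite -(fineK (integrable_fin_num measurableT Ig)) eG -EFinM.
  by rewrite -exprMn mulVf // expr1n.
have eH : hellinger2 mu s u = 1 - P / N.
  rewrite /hellinger2 (L2_expand (fun x => Num.sqrt (s x)) g _ N^-1 Hf Hg); last first.
    move=> x; rewrite /u sqrtr_sqr ger0_norm; first by rewrite mulrC.
    by rewrite divr_ge0 // ltW.
  by rewrite eF eG -/P; field.
have eE : L2norm mu (fun x => Num.sqrt (s x) - g x) ^+ 2 = 1 - 2 * (P / N) * N + N ^+ 2.
  rewrite L2norm_sq (L2_expand (fun x => Num.sqrt (s x)) g _ 1 Hf Hg); last by move=> x; rewrite mul1r.
  by rewrite eF eG -/P; field.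
rewrite eH; apply: alg_ii eE.
- exact: divr_ge0 (ltW Ng).
- exact: Ng.
- exact: sqr_ge0.
Qed.

Lemma part_iii {d} {T : measurableType d} {R : realType}
  (mu : {measure set T -> \bar R}) :
  (forall s t : T -> R,
     is_density mu s -> isL1 mu t ->
     (0 < \int[mu]_x (Order.max (t x) 0)%:E)%E ->
     let pit := fun x => Order.max (t x) 0 /
                         fine (\int[mu]_y (Order.max (t y) 0)%:E) in
     let e := Order.min (L2norm mu (fun x => Num.sqrt (s x)
                              - Num.sqrt (Order.max (t x) 0)) ^+ 2) 1 in
     hellinger2 mu s pit <= 1 - Num.sqrt (1 - e) /\
     1 - Num.sqrt (1 - e) <= e).
Proof.
move=> s t Hs Ht Hpos pit e.
have [HL2 [Eint Im]] := L1_sqrt Ht.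
set c := fine (\int[mu]_y (Order.max (t y) 0)%:E).
have c0 : 0 < c.
  have fin := integrable_fin_num measurableT Im.
  by rewrite -lte_fin /c fineK.
have eN : L2norm mu (fun x => Num.sqrt (Order.max (t x) 0)) = Num.sqrt c.
  by rewrite /L2norm Eint.
have Ng : 0 < L2norm mu (fun x => Num.sqrt (Order.max (t x) 0)) by rewrite eN sqrtr_gt0.
have := part_ii mu s (fun x => Num.sqrt (Order.max (t x) 0)) Hs HL2 (fun x => sqrtr_ge0 _) Ng.
cbv zeta; move=> [_ [h1 h2]].
have <- : (fun x => (Num.sqrt (Order.max (t x) 0) /
            L2norm mu (fun x => Num.sqrt (Order.max (t x) 0))) ^+ 2) = pit.
  apply: funext => x; rewrite eN expr_div_n !sqr_sqrtr //; first exact: ltW.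
  by rewrite le_max lexx orbT.
by split.
Qed.

Theorem lemma1 (d : measure_display) (T : measurableType d) (R : realType)
  (mu : {measure set T -> \bar R}) :
  (* (i) *)
  (forall f g : T -> R,
     isL2 mu f -> isL2 mu g ->
     (forall x, 0 <= f x) -> (forall x, 0 <= g x) ->
     L2norm mu f = 1 -> 0 < L2norm mu g ->
     let gbar := fun x => g x / L2norm mu g in
     L2norm mu (fun x => f x - gbar x) ^+ 2
       <= 4 * L2norm mu (fun x => f x - g x) ^+ 2
          / (4 - L2norm mu (fun x => f x - gbar x) ^+ 2)
     /\ 4 * L2norm mu (fun x => f x - g x) ^+ 2
          / (4 - L2norm mu (fun x => f x - gbar x) ^+ 2)
        <= 2 * L2norm mu (fun x => f x - g x) ^+ 2)
  /\
  (* (ii) *)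
  (forall s g : T -> R,
     is_density mu s -> isL2 mu g -> (forall x, 0 <= g x) ->
     0 < L2norm mu g ->
     let u := fun x => (g x / L2norm mu g) ^+ 2 in
     let e := Order.min (L2norm mu (fun x => Num.sqrt (s x) - g x) ^+ 2) 1 in
     is_density mu u /\
     hellinger2 mu s u <= 1 - Num.sqrt (1 - e) /\
     1 - Num.sqrt (1 - e) <= e)
  /\
  (* (iii) *)
  (forall s t : T -> R,
     is_density mu s -> isL1 mu t ->
     (0 < \int[mu]_x (Order.max (t x) 0)%:E)%E ->
     let pit := fun x => Order.max (t x) 0 /
                         fine (\int[mu]_y (Order.max (t y) 0)%:E) in
     let e := Order.min (L2norm mu (fun x => Num.sqrt (s x)
                              - Num.sqrt (Order.max (t x) 0)) ^+ 2) 1 in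
     hellinger2 mu s pit <= 1 - Num.sqrt (1 - e) /\
     1 - Num.sqrt (1 - e) <= e).
Proof.
split; first exact: part_i.
split; first exact: part_ii.
exact: part_iii.
Qed.
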